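(* Let $M$ be a rank-$3$ matroid on $[n]$ with no circuits of size $3$. Let $P_1,\dots,P_k$ be the distinct parallel classes of $M$ having more than one element, and let $N$ be the set of non-loop elements that are not parallel to any other element. Then $M$ is DJS if and only if $$\left\lfloor\tfrac{|P_1|}{2}\right\rfloor+\cdots+\left\lfloor\tfrac{|P_k|}{2}\right\rfloor-k<|N|-2.$$
   Context: A rank-$3$ matroid $M$ on $[n]$ is called DJS if, letting $E$ be the set of non-loop elements of $M$, every linear ordering $w_1w_2\cdots w_m$ of $E$ has three consecutive elements $\{w_j,w_{j+1},w_{j+2}\}$ forming a basis of $M$. *)

(* Defs.v *)
From HB Require Import structures.
From mathcomp Require Import all_boot all_order all_algebra.
Set Implicit Arguments. Unset Strict Implicit. Unset Printing Implicit Defensive.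

Record matroid (n : nat) := Matroid {
  indep : {set 'I_n} -> bool;
  indep0 : indep set0;
  indep_sub : forall A B : {set 'I_n}, B \subset A -> indep A -> indep B;
  indep_exchange : forall A B : {set 'I_n}, indep A -> indep B ->
      #|A| < #|B| -> exists2 x, x \in B :\: A & indep (x |: A)
}.

Section MatroidDefs.
Variables (n : nat) (M : matroid n).

Definition mrank : nat := \max_(A : {set 'I_n} | indep M A) #|A|.

Definition is_basis (B : {set 'I_n}) : bool := maxset (indep M) B.

Definition is_circuit (C : {set 'I_n}) : bool := minset (fun X => ~~ indep M X) C.

Definition is_loop (x : 'I_n) : bool := ~~ indep M [set x].

Definition nonloops : {set 'I_n} := [set x | ~~ is_loop x].

Definition parallel (x y : 'I_n) : bool :=
  [&& ~~ is_loop x, ~~ is_loop y & (x == y) || ~~ indep M [set x; y]].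

Definition parallel_classes : {set {set 'I_n}} :=
  [set [set y | parallel x y] | x in nonloops].

Definition big_parallel_classes : {set {set 'I_n}} :=
  [set P in parallel_classes | 1 < #|P|].

Definition lone_elements : {set 'I_n} :=
  [set x in nonloops | [forall y, parallel x y ==> (y == x)]].

Definition DJS : Prop :=
  forall w : seq 'I_n, perm_eq w (enum nonloops) ->
    exists (s1 s2 : seq 'I_n) (a b c : 'I_n),
      w = s1 ++ [:: a; b; c] ++ s2 /\ is_basis [set a; b; c].

End MatroidDefs.

(* Main.v *)
Require Import Defs.
From mathcomp Require Import all_boot all_order all_algebra.
Import Order.TTheory GRing.Theory Num.Theory.
From mathcomp Require Import zify.
Set Implicit Arguments. Unset Strict Implicit. Unset Printing Implicit Defensive.


Section Gen.
Variable T : eqType.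
Implicit Types (r : rel T) (s : seq T).

Definition win r a s := if s is b :: c :: _ then [|| r a b, r b c | r a c] else true.
Fixpoint badr r s := if s is a :: s' then win r a s' && badr r s' else true.
Definition okstart r s := if s is u :: v :: _ then r u v else true.

Lemma badr_window r s1 a b c s2 :
  badr r (s1 ++ [:: a; b; c] ++ s2) -> [|| r a b, r b c | r a c].
Proof. by elim: s1 => [|x s1 IH] /=; case/andP => // _. Qed.

Lemma not_badr r s : ~~ badr r s -> exists s1 s2 a b c,
  s = s1 ++ [:: a; b; c] ++ s2 /\ [/\ ~~ r a b, ~~ r b c & ~~ r a c].
Proof.
elim: s => [|x s IH] //=; rewrite negb_and; case/orP.
  case: s {IH} => [|b [|c s]] //= H.
  exists [::], s, x, b, c; split => //.
  by move: H; rewrite !negb_or => /and3P[-> -> ->].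
move/IH => [s1 [s2 [a [b [c [-> H]]]]]].
by exists (x :: s1), s2, a, b, c.
Qed.

Lemma badr_mono r r' s : (forall x y, r x y -> r' x y) -> badr r s -> badr r' s.
Proof.
move=> H; elim: s => [|x s IH] //= /andP[W /IH ->]; rewrite andbT.
case: s {IH} W => [|b [|c s]] //= /or3P[/H->|/H->|/H->]; by rewrite ?orbT.
Qed.

Lemma L_cons_ok r a s : okstart r s -> badr r s -> badr r (a :: s).
Proof. by case: s => [|u [|v s]] // /= H B; apply/andP; split => //=; rewrite H orbT. Qed.

Lemma L_pair r a b s : r a b -> badr r (b :: s) -> badr r (a :: b :: s).
Proof. by move=> H B; apply/andP; split => //; case: s {B} => [|c s] //=; rewrite H. Qed.

Lemma L_skip r a b c s : r a c -> badr r (b :: c :: s) -> badr r (a :: b :: c :: s).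
Proof. by move=> H B; apply/andP; split => //=; rewrite H !orbT. Qed.

Definition clique r (c : seq T) := {in c &, forall x y, r x y}.

Lemma cat_clique r c s : clique r c -> okstart r s -> badr r s -> badr r (c ++ s).
Proof.
elim: c => [|x c IH] // Hc Ho Hb.
case: c IH Hc => [|y c] IH Hc /=; first by apply: L_cons_ok.
apply: L_pair; first by apply: Hc; rewrite !inE eqxx ?orbT.
apply: IH => // u v Hu Hv; apply: Hc; by rewrite inE ?Hu ?Hv orbT.
Qed.

Fixpoint weave (c t : seq T) := if t is x :: t' then take 2 c ++ x :: weave (drop 2 c) t' else c.

Lemma weave_perm c t : perm_eq (weave c t) (c ++ t).
Proof.
elim: t c => [|x t IH] c /=; first by rewrite cats0.
rewrite -[c in X in perm_eq _ X](cat_take_drop 2) -catA perm_cat2l -cat1s -[_ :: t]cat1s.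
rewrite perm_sym perm_catCA perm_cat2l perm_sym; exact: IH.
Qed.

Lemma weave_head c t : 2 <= size c -> exists c0 c1 rest, weave c t = c0 :: c1 :: rest /\ take 2 c = [:: c0; c1].
Proof.
case: c => [|c0 [|c1 c]] // _; exists c0, c1.
case: t => [|x t] /=; rewrite ?take0 ?drop0 /=; first by exists c.
by exists (x :: weave c t).
Qed.

Lemma weave_ok r c t s0 : clique r c -> 2 * size t + 2 <= size c ->
  okstart r s0 -> badr r s0 -> badr r (weave c t ++ s0) /\ okstart r (weave c t ++ s0).
Proof.
elim: t c => [|x t IH] c Hc Hs Ho Hb /=.
  split; first exact: cat_clique.
  case: c Hc Hs => [|c0 [|c1 c]] Hc Hs //=; apply: Hc; by rewrite !inE eqxx ?orbT.
case: c Hc Hs => [|c0 [|c1 c]] Hc Hs; try by move: Hs; rewrite /= mulnS !addnS.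
have Hc' : clique r c by move=> u v Hu Hv; apply: Hc; rewrite !inE ?Hu ?Hv !orbT.
have Hs' : 2 * size t + 2 <= size c by move: Hs; rewrite /= mulnS !addnS.
have [B O] := IH c Hc' Hs' Ho Hb.
have [c2 [c3 [rest [E1 E2]]]] := weave_head t (leq_trans (leq_addl _ _) Hs').
have E2' : c2 \in c by rewrite -(cat_take_drop 2 c) E2 inE eqxx.
have B' : badr r (c2 :: c3 :: rest ++ s0) by move: B; rewrite E1.
have O' : r c2 c3 by move: O; rewrite E1.
have -> : (weave [:: c0, c1 & c] (x :: t) ++ s0) = [:: c0, c1, x, c2, c3 & rest ++ s0].
  by rewrite /= take0 drop0 E1.
split; last by apply: Hc; rewrite !inE eqxx ?orbT.
apply: L_pair; first by apply: Hc; rewrite !inE eqxx ?orbT.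
apply: L_skip; first by apply: Hc; rewrite !inE ?eqxx ?E2' ?orbT.
exact: L_cons_ok.
Qed.

End Gen.

Lemma badr_map (T U : eqType) (f : U -> T) (r : rel T) (s : seq U) :
  badr r (map f s) = badr (relpre f r) s.
Proof. by elim: s => [|x s IH] //=; rewrite IH; case: s {IH} => [|b [|c s]]. Qed.



Lemma build (T : eqType) (r : rel T) (cs : seq (seq T)) (ss base : seq T) :
  (forall c, c \in cs -> clique r c /\ 1 < size c) ->
  size ss <= \sum_(c <- cs) (size c)./2.-1 ->
  okstart r base -> badr r base ->
  exists w, [/\ perm_eq w (flatten cs ++ ss ++ base), badr r w & okstart r w].
Proof.
move=> Hcs; elim: cs ss Hcs => [|c cs IH] ss Hcs.
  rewrite big_nil leqn0 size_eq0 => /eqP -> Ho Hb; by exists base.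
rewrite big_cons => Hsz Ho Hb.
have [Hc Hc2] := Hcs c (mem_head _ _).
set q := (size c)./2.-1.
have [w' [P' B' O']] : exists w', [/\ perm_eq w' (flatten cs ++ drop q ss ++ base), badr r w' & okstart r w'].
  apply: IH => //; first by move=> d Hd; apply: Hcs; rewrite inE Hd orbT.
  rewrite size_drop; lia.
have Hq : 2 * size (take q ss) + 2 <= size c.
  rewrite size_take; have := odd_double_half (size c); rewrite -muln2 /q.
  have := leq_b1 (odd (size c)).
  move: (nat_of_bool (odd _)) (half _) Hc2 => o h Hc2.
  case: ltnP => H; lia.
have [B O] := weave_ok Hc Hq O' B'.
exists (weave c (take q ss) ++ w'); split => //.
rewrite /= -[ss in X in perm_eq _ X](cat_take_drop q).
set t := take q ss.
apply: (perm_trans (perm_cat (weave_perm c t) P')).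
by rewrite -!catA perm_cat2l perm_catCA.
Qed.


Ltac genb := repeat match goal with
 | H : context [nat_of_bool ?b] |- _ => revert H
 end; repeat match goal with |- context [nat_of_bool ?b] =>
   have := leq_b1 b; generalize (nat_of_bool b); intros ? ? end; intros.

Section Count.
Variable L : finType.
Implicit Types (l : seq L).
Definition Dc l := \sum_(C : L) (C \in l : nat).
Definition Fc l := \sum_(C : L) (count_mem C l)./2.
Definition extra l : nat :=
  if l is a :: b :: _ then (if a == b then 1 else ~~ odd (count_mem a l)) else 1.

Lemma Dc_cons x l : Dc (x :: l) + (x \in l) = Dc l + 1.
Proof.
rewrite /Dc (bigD1 x) //= [in RHS](bigD1 x) //= inE eqxx /=.
rewrite (eq_bigr (fun C => (C \in l : nat))); last first.
  by move=> C /negbTE HC; rewrite inE HC.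
by case: (x \in l); rewrite /= ?addn0 ?add0n ?addn1 ?add1n ?addnS ?addSn.
Qed.

Lemma Fc_cons x l : Fc (x :: l) = Fc l + odd (count_mem x l).
Proof.
rewrite /Fc (bigD1 x) //= [in RHS](bigD1 x) //= eqxx add1n -uphalfE uphalf_half.
rewrite (eq_bigr (fun C => (count_mem C l)./2)); last first.
  by move=> C HC; rewrite eq_sym (negbTE HC).
genb. move: (half _) (\sum_(_ | _) _) => a b. lia.
Qed.

Lemma Dc_nil : Dc [::] = 0.
Proof. by rewrite /Dc big1. Qed.
Lemma Fc_nil : Fc [::] = 0.
Proof. by rewrite /Fc big1. Qed.

Lemma extra_cons2 x a l : extra (x :: a :: l) = if x == a then 1 else odd (count_mem x (a :: l)).
Proof. by rewrite /extra /= eqxx /= negbK. Qed.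

Lemma count_bound l : badr eq_op l -> Dc l + extra l <= Fc l + 2.
Proof.
elim: l => [|x l IH]; first by rewrite Dc_nil Fc_nil.
move=> /= /andP[W /IH {}IH].
have D := Dc_cons x l; have F := Fc_cons x l.
have cnt0 : x \notin l -> count_mem x l = 0 by move/count_memPn.
case: l IH W D F cnt0 => [|a l'] IH W D F cnt0.
  by rewrite /= in D F *; rewrite Dc_nil in D; rewrite Fc_nil in F; rewrite F; genb; lia.
have -> : ~~ odd ((x == x) + count_mem x (a :: l')) = odd (count_mem x (a :: l')) by rewrite eqxx /= negbK.
case: (eqVneq x a) => [Exa|xa].
  subst x.
  have xin : a \in a :: l' by rewrite mem_head.
  rewrite xin /= in D.
  case: l' IH W D F cnt0 xin => [|b t] IH W D F cnt0 xin.
    by rewrite /= in IH; genb; lia.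
  rewrite /extra -/(count_mem a _) in IH.
  case: (eqVneq a b) IH => [_|ab] IH; first by genb; lia.
  move: IH F; case: (odd (count_mem a (a :: b :: t))) => /= IH F; genb; lia.
case Hx: (x \in a :: l') D cnt0 => D cnt0.
  by rewrite /= in D; genb; lia.
rewrite cnt0 // in F.
case: l' IH W D F Hx cnt0 => [|b t] IH W D F Hx cnt0.
  by rewrite /= in IH D; rewrite F /= eq_sym (negbTE xa) /=; genb; lia.
have W' : [|| x == a, a == b | x == b] by [].
rewrite (negbTE xa) /= in W'.
case: (eqVneq x b) W' Hx => [->|xb] W' Hx; first by rewrite !inE eqxx orbT in Hx.
rewrite orbF in W'; rewrite /extra W' in IH.
rewrite F (cnt0 isT) /= in D *; genb; lia.
Qed.
End Count.


Section Mat.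
Variables (n : nat) (M : matroid n).
Local Notation I := (indep M).
Local Notation par := (parallel M).
Local Notation NL := (nonloops M).

Lemma nlE x : (x \in NL) = I [set x].
Proof. by rewrite inE /is_loop negbK. Qed.

Lemma parE x y : par x y = [&& x \in NL, y \in NL & (x == y) || ~~ I [set x; y]].
Proof. by rewrite /parallel !inE. Qed.

Lemma set2C (x y : 'I_n) : [set x; y] = [set y; x].
Proof. by rewrite setUC. Qed.

Lemma par_sym x y : par x y = par y x.
Proof. by rewrite !parE set2C eq_sym; case: (x \in NL); case: (y \in NL). Qed.

Lemma par_refl x : x \in NL -> par x x.
Proof. by move=> H; rewrite parE H eqxx. Qed.

Lemma par_nl x y : par x y -> (x \in NL) && (y \in NL).
Proof. by rewrite parE => /and3P[-> ->]. Qed.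

Lemma par_trans y x z : par x y -> par y z -> par x z.
Proof.
rewrite !parE => /and3P[Hx Hy Hxy] /and3P[_ Hz Hyz].
rewrite Hx Hz /=.
case: (eqVneq x z) => //= xz.
case: (eqVneq x y) Hxy => [Exy|xy] /= Hxy.
  by subst y; rewrite (negbTE xz) in Hyz.
case: (eqVneq y z) Hyz => [Eyz|yz] /= Hyz.
  by subst z.
apply/negP => Ixz.
have Iy : I [set y] by rewrite -nlE.
have := indep_exchange Iy Ixz.
rewrite cards1 cards2 xz => /(_ isT) [e].
rewrite !inE => /andP[ey /orP[]] /eqP -> Ie.
  by move: Hxy; rewrite Ie.
by move: Hyz; rewrite set2C Ie.
Qed.

Definition cls x := [set y | par x y].

Lemma in_cls x y : (y \in cls x) = par x y.
Proof. by rewrite inE. Qed.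

Lemma cls_eq x y : par x y -> cls x = cls y.
Proof.
move=> H; apply/setP => z; rewrite !in_cls; apply/idP/idP => Hz.
  by rewrite par_sym in H; exact: par_trans H Hz.
exact: par_trans H Hz.
Qed.

Lemma cls_eqP x y : x \in NL -> y \in NL -> (cls x == cls y) = par x y.
Proof.
move=> Hx Hy; apply/eqP/idP => [E|]; last exact: cls_eq.
have : y \in cls y by rewrite in_cls par_refl.
by rewrite -E in_cls.
Qed.

Lemma card3 (a b c : 'I_n) : a != b -> b != c -> a != c -> #|[set a; b; c]| = 3.
Proof.
move=> ab bc ac; rewrite -setUA cardsU1 cards2 bc !inE negb_or ab ac.
done.
Qed.

Lemma basis3 (a b c : 'I_n) : mrank M = 3 ->
  (forall C : {set 'I_n}, is_circuit M C -> #|C| != 3) ->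
  a != b -> b != c -> a != c ->
  I [set a; b] -> I [set b; c] -> I [set a; c] -> is_basis M [set a; b; c].
Proof.
move=> H3 Hc ab bc ac Iab Ibc Iac.
have Iabc : I [set a; b; c].
  apply/negPn/negP => Hd.
  have : is_circuit M [set a; b; c].
    apply/minsetP; split => // B HB Hsub.
    apply/eqP; rewrite eqEsubset Hsub /=.
    apply/negPn/negP => Hns; apply: (negP HB).
    have [z Hz Hzn] := subsetPn Hns.
    have sub2 : forall u v, (forall y, y \in B -> (y == u) || (y == v)) -> I [set u; v] -> I B.
      move=> u v Huv Iuv; apply: (@indep_sub _ M _ B _ Iuv).
      by apply/subsetP => y /Huv; rewrite !inE.
    move: Hz; rewrite !inE -orbA => /or3P[] /eqP Ez; subst z.
    + apply: (sub2 b c) => // y yB; move: (subsetP Hsub y yB); rewrite !inE -orbA.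
      by case/or3P => [/eqP Ey|->|->]; rewrite ?orbT //; rewrite -Ey yB in Hzn.
    + apply: (sub2 a c) => // y yB; move: (subsetP Hsub y yB); rewrite !inE -orbA.
      by case/or3P => [->|/eqP Ey|->]; rewrite ?orbT //; rewrite -Ey yB in Hzn.
    + apply: (sub2 a b) => // y yB; move: (subsetP Hsub y yB); rewrite !inE -orbA.
      by case/or3P => [->|->|/eqP Ey]; rewrite ?orbT //; rewrite -Ey yB in Hzn.
  by move/Hc; rewrite card3.
apply/maxsetP; split => // B IB Hsub.
apply/eqP; rewrite eq_sym eqEcard Hsub card3 //.
by rewrite -H3 /mrank (leq_bigmax_cond (F := fun A : {set 'I_n} => #|A|) _ IB).
Qed.

Local Notation big := (big_parallel_classes M).
Local Notation lone := (lone_elements M).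
Local Notation classes := (parallel_classes M).

Lemma classes_cls x : x \in NL -> cls x \in classes.
Proof. by move=> H; apply: imset_f. Qed.

Lemma class_cls P x : P \in classes -> x \in P -> P = cls x.
Proof. by case/imsetP => z Hz -> Hx; apply: cls_eq; rewrite -in_cls. Qed.

Lemma big_cls P x : P \in big -> x \in P -> P = cls x.
Proof. by rewrite inE => /andP[HP _]; apply: class_cls. Qed.

Lemma class_nl P x : P \in classes -> x \in P -> x \in NL.
Proof. by case/imsetP => z Hz -> ; rewrite in_cls => /par_nl /andP[]. Qed.

Lemma bigE P : (P \in big) = (P \in classes) && (1 < #|P|).
Proof. by rewrite inE. Qed.

Lemma cls_self x : x \in NL -> x \in cls x.
Proof. by move=> H; rewrite in_cls par_refl. Qed.

Lemma loneE x : x \in NL -> (x \in lone) = ~~ (1 < #|cls x|).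
Proof.
move=> Hx; rewrite inE Hx /= -leqNgt; apply/forallP/idP => [H|H y].
  rewrite -(cards1 x); apply: subset_leq_card; apply/subsetP => y.
  by rewrite in_cls inE => /(implyP (H y)).
apply/implyP => Hy.
have := card_le1P H x (cls_self Hx) y.
by rewrite in_cls Hy inE => /esym.
Qed.

Lemma lone_nl x : x \in lone -> x \in NL.
Proof. by rewrite inE => /andP[]. Qed.

Lemma lone_cls x : x \in lone -> cls x = [set x].
Proof.
move=> Hl; have Hx := lone_nl Hl.
move: Hl; rewrite inE Hx /= => /forallP H.
apply/setP => y; rewrite in_cls inE; apply/idP/idP => [/(implyP (H y))//|/eqP ->].
exact: par_refl.
Qed.

Lemma count_cls C : count (fun x => cls x == C) (enum NL) = if C \in classes then #|C| else 0.
Proof.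
case: ifP => HC.
  have [z Hz EC] := imsetP HC.
  have EC' : C = cls z by [].
  rewrite EC'; rewrite EC' in HC *; clear EC EC'.
  rewrite (@eq_in_count _ _ (mem (cls z))); last first.
    move=> x; rewrite mem_enum => Hx /=.
    by rewrite cls_eqP // in_cls par_sym.
  rewrite -size_filter -(perm_size (enum_setI NL (cls z))) -cardE.
  suff -> : NL :&: cls z = cls z by []. by apply/setP => x; rewrite inE; apply/andb_idl; exact: class_nl.
apply/eqP; rewrite -leqn0 leqNgt -has_count; apply/hasPn => x.
rewrite mem_enum => Hx; apply/negP => /eqP E.
by move: HC; rewrite -E classes_cls.
Qed.

End Mat.


Section Main.
Variables (n : nat) (M : matroid n).
Local Notation I := (indep M).
Local Notation par := (parallel M).
Local Notation NL := (nonloops M).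
Local Notation big := (big_parallel_classes M).
Local Notation lone := (lone_elements M).
Local Notation classes := (parallel_classes M).
Local Notation cls := (cls M).

Lemma card_classes : #|big| + #|lone| <= #|classes|.
Proof.
rewrite -[#|classes|]sum1_card (bigID (fun C : {set 'I_n} => 1 < #|C|)) /=.
apply: leq_add.
  rewrite sum1dep_card; apply: subset_leq_card; apply/subsetP => C.
  by rewrite !inE.
rewrite sum1dep_card.
rewrite -(card_in_imset (f := cls) (D := mem lone)); last first.
  by move=> x y Hx Hy; rewrite !lone_cls // => /set1_inj.
apply: subset_leq_card; apply/subsetP => C /imsetP [x Hx ->].
by rewrite inE classes_cls ?lone_nl //= lone_cls // cards1.
Qed.

Lemma mem_map_cls w C : perm_eq w (enum NL) -> (C \in map cls w) = (C \in classes).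
Proof.
move=> Hw; apply/mapP/imsetP => [[x Hx ->]|[x Hx ->]]; exists x => //.
  by rewrite -mem_enum -(perm_mem Hw).
by rewrite (perm_mem Hw) mem_enum.
Qed.

Lemma count_map_cls w C : perm_eq w (enum NL) ->
  count_mem C (map cls w) = if C \in classes then #|C| else 0.
Proof.
move=> Hw; rewrite count_map -count_cls.
by apply: (permP Hw).
Qed.

Lemma Dc_map w : perm_eq w (enum NL) -> Dc (map cls w) = #|classes|.
Proof.
move=> Hw; rewrite /Dc -[#|classes|]sum1_card [RHS]big_mkcond /=.
by apply: eq_bigr => C _; rewrite mem_map_cls //; case: (C \in classes).
Qed.

Lemma Fc_map w : perm_eq w (enum NL) -> Fc (map cls w) = \sum_(P in big) #|P|./2.
Proof.
move=> Hw; rewrite /Fc [RHS]big_mkcond /=.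
apply: eq_bigr => C _; rewrite count_map_cls // bigE; case: (C \in classes) => //=.
by case: ltnP => // H; case: #|C| H => [|[|k]].
Qed.

Lemma nl_of_w w x : perm_eq w (enum NL) -> x \in w -> x \in NL.
Proof. by move=> Hw; rewrite (perm_mem Hw) mem_enum. Qed.

Lemma npar_indep a b : a \in NL -> b \in NL -> ~~ par a b -> I [set a; b].
Proof. by move=> Ha Hb; rewrite parE Ha Hb /= negb_or negbK => /andP[]. Qed.

Lemma dirB : mrank M = 3 -> (forall C, is_circuit M C -> #|C| != 3) ->
  \sum_(P in big) #|P|./2 + 2 < #|lone| + #|big| -> DJS M.
Proof.
move=> H3 Hc Hlt w Hw.
case Hb: (badr par w).
  exfalso.
  have Hb' : badr eq_op (map cls w).
    rewrite badr_map; apply: badr_mono Hb => x y /= H; apply/eqP; exact: cls_eq.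
  have := count_bound Hb'; rewrite Dc_map // Fc_map //.
  have := card_classes; lia.
have [s1 [s2 [a [b [c [Ew [Nab Nbc Nac]]]]]]] := not_badr (negbT Hb).
exists s1, s2, a, b, c; split => //.
have Hu : uniq w by rewrite (perm_uniq Hw) enum_uniq.
have Hin : forall x, x \in [:: a; b; c] -> x \in NL.
  by move=> x Hx; apply: (nl_of_w Hw); rewrite Ew !mem_cat Hx orbT.
have Ha : a \in NL by apply: Hin; rewrite !inE eqxx.
have Hb2 : b \in NL by apply: Hin; rewrite !inE eqxx ?orbT.
have Hc2 : c \in NL by apply: Hin; rewrite !inE eqxx ?orbT.
move: Hu; rewrite Ew cat_uniq => /and3P[_ _]; rewrite cat_uniq => /and3P[U _ _].
move: U; rewrite /= !inE negb_or andbT => /andP[/andP[ab ac] bc].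
apply: basis3 => //; exact: npar_indep.
Qed.

Lemma npar_sub (S : {set 'I_n}) u v : u != v -> u \in S -> v \in S -> I S -> ~~ par u v.
Proof.
move=> uv Hu Hv IS; rewrite parE (negbTE uv) /=.
have : I [set u; v].
  apply: (@indep_sub _ M _ _ _ IS); apply/subsetP => y; rewrite !inE.
  by case/orP => /eqP ->.
by move=> ->; rewrite /= !andbF.
Qed.

Lemma dirA : #|lone| + #|big| <= \sum_(P in big) #|P|./2 + 2 -> ~ DJS M.
Proof.
move=> Hle D.
set cs := map (fun P : {set 'I_n} => enum P) (enum big).
set ss := enum lone.
set S := \sum_(c <- cs) (size c)./2.-1.
have HS : S + #|big| = \sum_(P in big) #|P|./2.
  rewrite /S big_map big_enum /= -sum1_card -big_split /=; apply: eq_bigr => P HP.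
  rewrite -cardE; have: 1 < #|P| by rewrite bigE in HP; case/andP: HP.
  by case: #|P| => [|[|k]] //= _; rewrite addn1.
have HN : size ss <= S + 2 by rewrite /ss -cardE; lia.
set mid := take S ss; set ex := drop S ss.
have Hex : size ex <= 2 by rewrite size_drop; lia.
have Hcs : forall c, c \in cs -> clique par c /\ 1 < size c.
  move=> c /mapP [P HP ->]; rewrite mem_enum in HP; split.
    move=> x y; rewrite !mem_enum => Hx Hy; have E := big_cls HP Hx.
    by rewrite E in_cls in Hy.
  by rewrite -cardE; rewrite bigE in HP; case/andP: HP.
have Hsm : size mid <= S by rewrite size_take; case: ltnP; lia.
have [base_ok base_bad] : okstart par (drop 1 ex) /\ badr par (drop 1 ex).
  by case: (ex) Hex => [|e1 [|e2 [|e3 t]]].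
have [w' [P' B' O']] := build Hcs Hsm base_ok base_bad.
set w := take 1 ex ++ w'.
have Bw : badr par w.
  by rewrite /w; case: (ex) Hex => [|e1 [|e2 [|e3 t]]] //= _; apply: L_cons_ok.
have Pw : perm_eq w (enum NL).
  apply: (@perm_trans _ (flatten cs ++ ss)).
    rewrite /w -(cat_take_drop S ss) -/mid -/ex -[ex in X in perm_eq _ X](cat_take_drop 1).
    have P2 : perm_eq (take 1 ex ++ w') (take 1 ex ++ (flatten cs ++ mid ++ drop 1 ex)) by rewrite perm_cat2l.
    apply: (perm_trans P2).
    by rewrite perm_catCA perm_cat2l perm_catCA.
  apply/allP => x _; apply/eqP.
  rewrite count_cat count_flatten sumnE /cs -map_comp big_map big_enum /=.
  rewrite (eq_bigr (fun P : {set 'I_n} => (x \in P : nat))); last first.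
    by move=> P _; rewrite count_uniq_mem ?enum_uniq // mem_enum.
  rewrite /ss !count_uniq_mem ?enum_uniq // !mem_enum.
  case Hx: (x \in NL).
    case: (boolP (1 < #|cls x|)) => Hbig.
      have Hcb : cls x \in big by rewrite bigE classes_cls.
      rewrite (bigD1 (cls x)) //= cls_self // big1 ?loneE ?Hbig //.
      move=> P /andP[HP NP]; apply/eqP; rewrite eqb0; apply/negP => HxP.
      by move/eqP: NP; apply; exact: big_cls HxP.
    rewrite big1 ?loneE ?Hbig //.
    move=> P HP; apply/eqP; rewrite eqb0; apply/negP => HxP.
    have E := big_cls HP HxP; rewrite bigE E in HP.
    by move: Hbig; case/andP: HP => _ ->.
  rewrite big1.
    by case Hl: (x \in lone) => //; move: Hx; rewrite (lone_nl Hl).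
  move=> P HP; apply/eqP; rewrite eqb0; apply/negP => HxP.
  by move: Hx; rewrite bigE in HP; case/andP: HP => HP _; rewrite (class_nl HP HxP).
have [s1 [s2 [a [b [c [Ew Hbasis]]]]]] := D w Pw.
have IS := maxsetp Hbasis.
rewrite Ew in Bw; have W := badr_window Bw.
have Hu : uniq w by rewrite (perm_uniq Pw) enum_uniq.
move: Hu; rewrite Ew cat_uniq => /and3P[_ _]; rewrite cat_uniq => /and3P[U _ _].
move: U; rewrite /= !inE negb_or andbT => /andP[/andP[ab ac] bc].
have Hm : forall y, y \in [:: a; b; c] -> y \in [set a; b; c].
  by move=> y; rewrite !inE -!orbA.
case/or3P: W => H.
- by move: H; apply/negP; apply: (npar_sub ab) IS; apply: Hm; rewrite !inE eqxx ?orbT.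
- by move: H; apply/negP; apply: (npar_sub bc) IS; apply: Hm; rewrite !inE eqxx ?orbT.
- by move: H; apply/negP; apply: (npar_sub ac) IS; apply: Hm; rewrite !inE eqxx ?orbT.
Qed.

End Main.


Lemma int_conv (a k m : nat) : ((a%:Z - k%:Z < m%:Z - 2)%R) = (a + 2 < m + k)%N.
Proof. by apply/idP/idP; lia. Qed.

Theorem proposition6p7 (n : nat) (M : matroid n) :
  mrank M = 3 ->
  (forall C : {set 'I_n}, is_circuit M C -> #|C| != 3) ->
  DJS M <->
  ((\sum_(P in big_parallel_classes M) ((#|P| %/ 2)%:Z))
     - (#|big_parallel_classes M|)%:Z
   < (#|lone_elements M|)%:Z - 2)%R.
Proof.
move=> H3 Hc.
rewrite -(big_morph Posz PoszD (erefl _)).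
have -> : \sum_(P in big_parallel_classes M) #|P| %/ 2 = \sum_(P in big_parallel_classes M) #|P|./2.
  by apply: eq_bigr => P _; rewrite divn2.
rewrite int_conv; split => [D|H].
  by rewrite ltnNge; apply/negP => Hle; exact: (dirA Hle D).
exact: dirB.
Qed.
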